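(* For $p\le \log r$, every deterministic online algorithm for the Online Mixed Packing and Covering problem with objective the $\ell_p$ norm of the violation vector $\vec\lambda=(\lambda_1,\dots,\lambda_r)$ has competitive ratio $\Omega(p\log(d/\log r))$. This holds even when all entries of the covering and packing matrices are in $\{0,1\}$.
   Context: Online Mixed Packing and Covering: there are $m$ non-negative variables $\vec x$, initially $0$, which may only increase over time. A set of $r$ packing constraints $P\vec x\le \vec p$ (with $P\in\mathbb{R}_{\ge0}^{r\times m}$, $\vec p>0$) is known offline; covering constraints $\sum_i C_{ji}x_i\ge c_j$ with non-negative entries arrive online one at a time and must be satisfied upon arrival by increasing variables. For each packing constraint $k$, the violation is $\lambda_k=\frac{\sum_i P_{ki}x_i}{p_k}$, and the objective is $\big(\sum_{k=1}^r\lambda_k^p\big)^{1/p}$, compared with the optimum offline value. $d$ is the maximum number of variables appearing in any packing or covering constraint. *)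

(* Defs.v *)
From Stdlib Require Import Reals List.
Import ListNotations.
Open Scope R_scope.

Fixpoint rsum (n : nat) (f : nat -> R) : R :=
  match n with
  | O => 0
  | S k => rsum k f + f k
  end.

Fixpoint supp_size (n : nat) (f : nat -> R) : nat :=
  match n with
  | O => O
  | S k => (supp_size k f + (if Req_EM_T (f k) 0 then 0 else 1))%nat
  end.

Definition rpow (x y : R) : R := if Rle_dec x 0 then 0 else Rpower x y.

(* A covering constraint  sum_i C i * x i >= b  is given by the pair (C, b). *)
Definition cover := ((nat -> R) * R)%type.

Definition covers (m : nat) (c : cover) (x : nat -> R) : Prop :=
  rsum m (fun i => fst c i * x i) >= snd c.

Definition viol (m : nat) (P : nat -> nat -> R) (pv : nat -> R)
  (x : nat -> R) (k : nat) : R :=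
  rsum m (fun i => P k i * x i) / pv k.

Definition lp_obj (p : R) (m r : nat) (P : nat -> nat -> R) (pv : nat -> R)
  (x : nat -> R) : R :=
  rpow (rsum r (fun k => rpow (viol m P pv x k) p)) (/ p).

(* A deterministic online algorithm: given the offline data (m, r, P, pv)
   and the sequence of covering constraints revealed so far, it outputs
   the current value of the variables x_0 .. x_{m-1}. *)
Definition online_alg :=
  nat -> nat -> (nat -> nat -> R) -> (nat -> R) -> list cover -> nat -> R.

(* A covering constraint with non-negative coefficients that can be satisfied
   (some positive coefficient, or a non-positive right-hand side). *)
Definition admissible_cover (m : nat) (c : cover) : Prop :=
  (forall i, (i < m)%nat -> 0 <= fst c i) /\
  ((exists i, (i < m)%nat /\ 0 < fst c i) \/ snd c <= 0).

Definition valid_alg (A : online_alg) : Prop :=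
  forall (m r : nat) (P : nat -> nat -> R) (pv : nat -> R) (hist : list cover),
    (forall i, (i < m)%nat -> 0 <= A m r P pv hist i) /\
    (forall c : cover, admissible_cover m c ->
       (forall i, (i < m)%nat -> A m r P pv hist i <= A m r P pv (hist ++ [c]) i) /\
       covers m c (A m r P pv (hist ++ [c]))).

Definition is01 (a : R) : Prop := a = 0 \/ a = 1.

(* Main.v *)
Require Import Defs.
From Stdlib Require Import Reals Lra Lia Psatz List ZArith.
Import ListNotations.
Open Scope R_scope.

Lemma rsum_ext n f g : (forall i, (i < n)%nat -> f i = g i) -> rsum n f = rsum n g.
Proof. induction n; simpl; intros H; auto. rewrite IHn by (intros; apply H; lia). rewrite H by lia. auto. Qed.

Lemma rsum_le n f g : (forall i, (i < n)%nat -> f i <= g i) -> rsum n f <= rsum n g.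
Proof. induction n; simpl; intros H. lra. assert (H1 := IHn ltac:(intros; apply H; lia)). assert (H2 := H n ltac:(lia)). lra. Qed.

Lemma rsum_nonneg n f : (forall i, (i < n)%nat -> 0 <= f i) -> 0 <= rsum n f.
Proof. intros H. replace 0 with (rsum n (fun _ => 0)). apply rsum_le; auto.
 clear H; induction n; simpl; auto. rewrite IHn. lra. Qed.

Lemma rsum_zero n f : (forall i, (i < n)%nat -> f i = 0) -> rsum n f = 0.
Proof. induction n; simpl; intros H; auto. rewrite IHn by (intros; apply H; lia). rewrite H by lia. lra. Qed.

Lemma rsum_plus n f g : rsum n (fun i => f i + g i) = rsum n f + rsum n g.
Proof. induction n; simpl. lra. rewrite IHn. lra. Qed.

Lemma rsum_split a b f : rsum (a + b) f = rsum a f + rsum b (fun j => f (a + j)%nat).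
Proof. induction b; simpl. rewrite Nat.add_0_r. lra. rewrite Nat.add_succ_r. simpl. rewrite IHb. lra. Qed.

Lemma rsum_ge_term n f i : (forall j, (j < n)%nat -> 0 <= f j) -> (i < n)%nat -> f i <= rsum n f.
Proof. induction n; simpl; intros H Hi. lia.
 destruct (Nat.eq_dec i n). subst. assert (0 <= rsum n f) by (apply rsum_nonneg; intros; apply H; lia). lra.
 assert (f i <= rsum n f) by (apply IHn; [intros; apply H; lia| lia]). assert (0 <= f n) by (apply H; lia). lra. Qed.

Definition unitv (s : nat) (i : nat) : R := if Nat.eqb i s then 1 else 0.

Lemma rsum_unit n f s : (s < n)%nat -> rsum n (fun i => f i * unitv s i) = f s.
Proof. induction n; intros H. lia. simpl. unfold unitv at 2.
 destruct (Nat.eqb_spec n s).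
 - subst. rewrite rsum_zero. lra. intros i Hi. unfold unitv. destruct (Nat.eqb_spec i s). lia. lra.
 - rewrite IHn by lia. lra. Qed.

Definition indI (lo w i : nat) : R := if (Nat.leb lo i && Nat.ltb i (lo + w))%bool then 1 else 0.
Definition rs (lo w : nat) (x : nat -> R) : R := rsum w (fun j => x (lo + j)%nat).

Lemma ind_in lo w i : (lo <= i < lo + w)%nat -> indI lo w i = 1.
Proof. intros H. unfold indI. destruct (Nat.leb_spec lo i); destruct (Nat.ltb_spec i (lo+w)); simpl; auto; lia. Qed.
Lemma ind_out lo w i : ~(lo <= i < lo + w)%nat -> indI lo w i = 0.
Proof. intros H. unfold indI. destruct (Nat.leb_spec lo i); destruct (Nat.ltb_spec i (lo+w)); simpl; auto; lia. Qed.
Lemma ind_01 lo w i : indI lo w i = 0 \/ indI lo w i = 1.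
Proof. unfold indI. destruct (_ && _)%bool; auto. Qed.

Lemma rsum_ind m lo w x : (lo + w <= m)%nat -> rsum m (fun i => indI lo w i * x i) = rs lo w x.
Proof. intros H. replace m with (lo + w + (m - lo - w))%nat by lia.
 rewrite !rsum_split. rewrite (rsum_zero lo). rewrite (rsum_zero (m - lo - w)).
 unfold rs. rewrite (rsum_ext w _ (fun j => x (lo + j)%nat)). lra.
 intros i Hi. rewrite ind_in by lia. lra.
 intros i Hi. rewrite ind_out by lia. lra.
 intros i Hi. rewrite ind_out by lia. lra. Qed.

Lemma rsum_ind0 m lo w x : (m <= lo)%nat -> rsum m (fun i => indI lo w i * x i) = 0.
Proof. intros H. apply rsum_zero. intros i Hi. rewrite ind_out by lia. lra. Qed.

Lemma rs_split lo a b x : rs lo (a + b) x = rs lo a x + rs (lo + a) b x.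
Proof. unfold rs. rewrite rsum_split. f_equal. apply rsum_ext. intros. f_equal. lia. Qed.

Lemma rs_blocks lo n D x : rs lo (n * D) x = rsum n (fun t => rs (lo + t * D) D x).
Proof. induction n. simpl. unfold rs; simpl; auto.
 replace (S n * D)%nat with (n * D + D)%nat by lia. rewrite rs_split, IHn. simpl. auto. Qed.

Lemma supp_split a b f : supp_size (a + b) f = (supp_size a f + supp_size b (fun j => f (a + j)%nat))%nat.
Proof. induction b; simpl. rewrite Nat.add_0_r. lia. rewrite Nat.add_succ_r. simpl. rewrite IHb. lia. Qed.

Lemma supp_le_n n f : (supp_size n f <= n)%nat.
Proof. induction n; simpl; auto. destruct (Req_EM_T (f n) 0); lia. Qed.

Lemma supp_zero n f : (forall i, (i < n)%nat -> f i = 0) -> supp_size n f = 0%nat.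
Proof. induction n; simpl; intros H; auto. rewrite IHn by (intros; apply H; lia).
 destruct (Req_EM_T (f n) 0). lia. exfalso. apply n0. apply H. lia. Qed.

Lemma supp_ge1 n f i : (i < n)%nat -> f i <> 0 -> (1 <= supp_size n f)%nat.
Proof. induction n; simpl; intros H1 H2. lia. destruct (Nat.eq_dec i n). subst.
 destruct (Req_EM_T (f n) 0). contradiction. lia.
 assert (1 <= supp_size n f)%nat by (apply IHn; auto; lia). lia. Qed.

Lemma supp_sub n f g h : (forall i, f i <> 0 -> g i <> 0 \/ h i <> 0) ->
  (supp_size n f <= supp_size n g + supp_size n h)%nat.
Proof. intros H. induction n; simpl; auto.
 destruct (Req_EM_T (f n) 0); destruct (Req_EM_T (g n) 0); destruct (Req_EM_T (h n) 0); try lia.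
 destruct (H n n0); contradiction. Qed.

Lemma supp_ind m lo w : (supp_size m (indI lo w) <= w)%nat.
Proof. assert (supp_size m (indI lo w) <= supp_size (lo + w + m) (indI lo w))%nat.
 { replace (lo + w + m)%nat with (m + (lo + w))%nat by lia. rewrite supp_split. lia. }
 rewrite !supp_split in H. rewrite (supp_zero lo) in H. rewrite (supp_zero m (fun j => indI lo w (lo + w + j)%nat)) in H.
 pose proof (supp_le_n w (fun j => indI lo w (lo + j)%nat)). simpl in *. lia.
 intros. apply ind_out. lia. intros. apply ind_out. lia. Qed.

Lemma supp_pos n f : (1 <= supp_size n f)%nat -> exists i, (i < n)%nat /\ f i <> 0.
Proof. induction n; simpl; intros H. lia. destruct (Req_EM_T (f n) 0).
 destruct IHn as [i [? ?]]. lia. exists i; split; auto; lia. exists n; split; auto. Qed.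

Definition goodc (m d : nat) (c : cover) : Prop :=
  admissible_cover m c /\ (forall i, (i < m)%nat -> is01 (fst c i)) /\ snd c = 1 /\
  (1 <= supp_size m (fst c) <= d)%nat.

Lemma alg_mono (A : online_alg) m r P pv : valid_alg A ->
  forall cs h, (forall c, In c cs -> goodc m 0 c \/ True -> admissible_cover m c) ->
  forall i, (i < m)%nat -> A m r P pv h i <= A m r P pv (h ++ cs) i.
Proof. intros HA cs. induction cs as [|c cs IH]; intros h Hc i Hi.
 rewrite app_nil_r. lra.
 replace (h ++ c :: cs) with ((h ++ [c]) ++ cs) by (rewrite <- app_assoc; auto).
 eapply Rle_trans. apply (proj1 (proj2 (HA m r P pv h) c (Hc c (or_introl eq_refl) (or_intror I)))). auto.
 apply IH; auto. intros c' H1 H2. apply Hc; simpl; auto. Qed.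

Lemma alg_mono' (A : online_alg) m r P pv d : valid_alg A ->
  forall cs h, (forall c, In c cs -> goodc m d c) ->
  forall i, (i < m)%nat -> A m r P pv h i <= A m r P pv (h ++ cs) i.
Proof. intros HA cs h Hc. apply alg_mono; auto. intros c H _. apply Hc; auto. Qed.

Lemma alg_nonneg (A : online_alg) m r P pv h i : valid_alg A -> (i < m)%nat -> 0 <= A m r P pv h i.
Proof. intros HA Hi. apply (proj1 (HA m r P pv h)); auto. Qed.

Lemma rs_mono lo w x y m : (lo + w <= m)%nat -> (forall i, (i < m)%nat -> x i <= y i) -> rs lo w x <= rs lo w y.
Proof. intros H1 H2. unfold rs. apply rsum_le. intros. apply H2. lia. Qed.

Lemma rs_nonneg lo w x m : (lo + w <= m)%nat -> (forall i, (i < m)%nat -> 0 <= x i) -> 0 <= rs lo w x.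
Proof. intros H1 H2. unfold rs. apply rsum_nonneg. intros. apply H2. lia. Qed.

Definition jc (la lb w : nat) : cover := (fun i => indI la w i + indI lb w i, 1).

Lemma jc_good m d la lb w : (1 <= w)%nat -> (la + w <= lb)%nat -> (lb + w <= m)%nat -> (2 * w <= d)%nat ->
  goodc m d (jc la lb w).
Proof. intros H0 H1 H2 H3. unfold goodc, jc; simpl.
 assert (H01 : forall i, is01 (indI la w i + indI lb w i)).
 { intros i. unfold is01. destruct (Compare_dec.le_lt_dec la i); destruct (Compare_dec.lt_dec i (la + w)).
   rewrite ind_in, ind_out by lia; lra. rewrite ind_out by lia.
   destruct (ind_01 lb w i) as [-> | ->]; lra. rewrite ind_out by lia.
   destruct (ind_01 lb w i) as [-> | ->]; lra. rewrite ind_out by lia.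
   destruct (ind_01 lb w i) as [-> | ->]; lra. }
 split; [|split; [|split]]; auto.
 - split. intros i _. simpl; destruct (H01 i); lra. left. exists la. split. lia.
   simpl; rewrite ind_in, ind_out by lia. lra.
 - split. apply supp_ge1 with la. lia. rewrite ind_in, ind_out by lia. lra.
   pose proof (supp_sub m (fun i => indI la w i + indI lb w i) (indI la w) (indI lb w)).
   pose proof (supp_ind m la w). pose proof (supp_ind m lb w).
   assert (supp_size m (fun i => (indI la w i + indI lb w i)%R) <= supp_size m (indI la w) + supp_size m (indI lb w))%nat.
   apply H. intros i Hi. destruct (Req_EM_T (indI la w i) 0). right. intro. apply Hi. lra. left; auto.
   lia. Qed.

Lemma jc_sum m la lb w x : (la + w <= lb)%nat -> (lb + w <= m)%nat ->
  rsum m (fun i => fst (jc la lb w) i * x i) = rs la w x + rs lb w x.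
Proof. intros. simpl. rewrite <- (rsum_ind m la w x), <- (rsum_ind m lb w x) by lia.
 rewrite <- rsum_plus. apply rsum_ext. intros. lra. Qed.

Lemma job (A : online_alg) m r P pv d : valid_alg A ->
  forall n h la lb, (la + 2 ^ n <= lb)%nat -> (lb + 2 ^ n <= m)%nat -> (2 * 2 ^ n <= d)%nat ->
  exists cs sa sb, (la <= sa < la + 2 ^ n)%nat /\ (lb <= sb < lb + 2 ^ n)%nat /\
   (forall c, In c cs -> goodc m d c /\ fst c sa = 1 /\ fst c sb = 1) /\
   rs la (2 ^ n) (A m r P pv (h ++ cs)) + rs lb (2 ^ n) (A m r P pv (h ++ cs)) >= INR n / 2.
Proof. intros HA n. induction n as [|n IH]; intros h la lb H1 H2 H3.
 - exists [], la, lb. simpl in *. split. lia. split. lia. split. intros c [].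
   assert (0 <= rs la 1 (A m r P pv (h ++ []))) by (apply (rs_nonneg _ _ _ m); [lia| intros; apply alg_nonneg; auto]).
   assert (0 <= rs lb 1 (A m r P pv (h ++ []))) by (apply (rs_nonneg _ _ _ m); [lia| intros; apply alg_nonneg; auto]).
   lra.
 - set (w := (2 ^ n)%nat). assert (Hw : (2 ^ S n = w + w)%nat) by (simpl; unfold w; lia).
   assert (Hw1 : (1 <= w)%nat) by (unfold w; pose proof (Nat.pow_nonzero 2 n); lia).
   rewrite Hw in *.
   set (c0 := jc la lb (w + w)). set (h1 := h ++ [c0]).
   assert (G0 : goodc m d c0) by (apply jc_good; lia).
   assert (Hcov : rs la (w + w) (A m r P pv h1) + rs lb (w + w) (A m r P pv h1) >= 1).
   { destruct (proj2 (HA m r P pv h) c0 (proj1 G0)) as [_ Hc]. unfold covers in Hc.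
     unfold c0 in Hc; rewrite jc_sum in Hc by lia. exact Hc. }
   rewrite !rs_split in Hcov.
   set (F1 := A m r P pv h1) in *.
   destruct (Rle_dec (rs la w F1) (rs (la + w) w F1)) as [Ea | Ea];
   destruct (Rle_dec (rs lb w F1) (rs (lb + w) w F1)) as [Eb | Eb].
   all: [> destruct (IH h1 la lb) as (cs & sa & sb & Ha & Hb & Hc & Hm); try lia
        | destruct (IH h1 la (lb + w)%nat) as (cs & sa & sb & Ha & Hb & Hc & Hm); try lia
        | destruct (IH h1 (la + w)%nat lb) as (cs & sa & sb & Ha & Hb & Hc & Hm); try lia
        | destruct (IH h1 (la + w)%nat (lb + w)%nat) as (cs & sa & sb & Ha & Hb & Hc & Hm); try lia ].
   all: exists (c0 :: cs), sa, sb; split; [lia|]; split; [lia|]; split;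
     [ intros c [<- | Hin]; [ split; [auto|]; unfold c0, jc; simpl; rewrite ind_in, ind_out by lia;
         split; [lra|]; rewrite ind_out, ind_in by lia; lra
       | apply Hc; auto ] | ].
   all: replace (h ++ c0 :: cs) with (h1 ++ cs) by (unfold h1; rewrite <- app_assoc; auto).
   all: fold w in Hm; rewrite !rs_split; rewrite S_INR.
   all: assert (Mo : forall i, (i < m)%nat -> F1 i <= A m r P pv (h1 ++ cs) i) by
          (intros; unfold F1; apply (alg_mono' A m r P pv d HA); auto; intros; apply Hc; auto).
   all: pose proof (rs_mono la w _ _ m ltac:(lia) Mo); pose proof (rs_mono (la + w) w _ _ m ltac:(lia) Mo);
        pose proof (rs_mono lb w _ _ m ltac:(lia) Mo); pose proof (rs_mono (lb + w) w _ _ m ltac:(lia) Mo).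
   all: lra.
Qed.

Lemma covers_mono m c x y : (forall i, (i < m)%nat -> 0 <= fst c i) -> (forall i, (i < m)%nat -> x i <= y i) ->
  covers m c x -> covers m c y.
Proof. unfold covers. intros H1 H2 H3. assert (rsum m (fun i => fst c i * x i) <= rsum m (fun i => fst c i * y i)).
 apply rsum_le. intros. apply Rmult_le_compat_l; auto. lra. Qed.

Lemma covers_unit m c s : (s < m)%nat -> fst c s = 1 -> snd c = 1 -> covers m c (unitv s).
Proof. unfold covers. intros. rewrite rsum_unit; auto. lra. Qed.

Lemma unitv_nonneg s i : 0 <= unitv s i.
Proof. unfold unitv. destruct (Nat.eqb i s); lra. Qed.


Lemma mul_lt_le a b B : (a < b)%nat -> (a * B + B <= b * B)%nat.
Proof. intros H. replace (a * B + B)%nat with (S a * B)%nat by lia. apply Nat.mul_le_mono_r. lia. Qed.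

Lemma load_unit B m s l k : (s < m)%nat -> (l * B <= s < l * B + B)%nat ->
  rsum m (fun i => indI (k * B) B i * unitv s i) = if Nat.eqb k l then 1 else 0.
Proof. intros H1 H2. rewrite rsum_unit by auto. destruct (Nat.eqb_spec k l).
 subst. apply ind_in. lia. apply ind_out. destruct (Compare_dec.lt_dec k l).
 pose proof (mul_lt_le k l B l0). lia. assert (l < k)%nat by lia. pose proof (mul_lt_le l k B H). lia. Qed.

Lemma load_nonneg m (P : nat -> nat -> R) k x : (forall i, 0 <= P k i) -> (forall i, 0 <= x i) ->
  0 <= rsum m (fun i => P k i * x i).
Proof. intros. apply rsum_nonneg. intros. apply Rmult_le_pos; auto. Qed.

Lemma load_plus3 m (f x y z : nat -> R) : rsum m (fun i => f i * (x i + y i + z i)) =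
  rsum m (fun i => f i * x i) + rsum m (fun i => f i * y i) + rsum m (fun i => f i * z i).
Proof. rewrite <- !rsum_plus. apply rsum_ext. intros. ring. Qed.

Lemma indI_nonneg a b i : 0 <= indI a b i.
Proof. destruct (ind_01 a b i) as [-> | ->]; lra. Qed.

Lemma blk_in q D B M m k t : B = (q * D)%nat -> m = (M * B)%nat -> (k < M)%nat -> (t < q)%nat ->
  (k * B + t * D + D <= m)%nat.
Proof. intros -> -> H1 H2. pose proof (mul_lt_le t q D H2). pose proof (mul_lt_le k M (q * D) H1). lia. Qed.

Lemma lv_mono q D B M m k n x y : B = (q * D)%nat -> m = (M * B)%nat -> (k < M)%nat -> (n <= q)%nat ->
  (forall i, (i < m)%nat -> x i <= y i) ->
  rsum n (fun t => rs (k * B + t * D) D x) <= rsum n (fun t => rs (k * B + t * D) D y).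
Proof. intros. apply rsum_le. intros t Ht. apply (rs_mono _ _ _ _ m); auto.
 apply (blk_in q D B M m); auto. lia. Qed.

Lemma tree (A : online_alg) q L D B M m d r (P : nat -> nat -> R) (pv : nat -> R) :
  valid_alg A -> (1 <= q)%nat -> D = (2 ^ L)%nat -> B = (q * D)%nat -> m = (M * B)%nat -> (2 * D <= d)%nat ->
  (forall k i, P k i = indI (k * B) B i) ->
  forall n h k0, (k0 + 2 ^ n <= M)%nat -> (n <= q)%nat ->
  exists cs w xs, (k0 <= w < k0 + 2 ^ n)%nat /\
    (forall c, In c cs -> goodc m d c) /\
    (forall i, 0 <= xs i) /\
    (forall c, In c cs -> covers m c xs) /\
    (forall k, rsum m (fun i => P k i * xs i) <= 1) /\
    (forall k, (k < k0 \/ k0 + 2 ^ n <= k \/ k = w)%nat -> rsum m (fun i => P k i * xs i) <= 0) /\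
    ((1 <= n)%nat -> exists l, (l < M)%nat /\ 1 <= rsum m (fun i => P l i * xs i) ) /\
    rsum n (fun t => rs (w * B + t * D) D (A m r P pv (h ++ cs))) >= INR n * INR L / 4.
Proof.
 intros HA Hq HD HB Hm Hd HP n. induction n as [|n IH]; intros h k0 Hk Hn.
 - exists [], k0, (fun _ => 0). simpl in Hk |- *. split. lia. split. intros c []. split. intros; lra.
   split. intros c [].
   assert (Z : forall k, rsum m (fun i => P k i * 0) = 0) by (intros; apply rsum_zero; intros; lra).
   split. intros k; rewrite Z; lra. split. intros k _; rewrite Z; lra. split. intros; lia. lra.
 - assert (Hp : (2 ^ S n = 2 ^ n + 2 ^ n)%nat) by (simpl; lia).
   rewrite Hp in Hk.
   destruct (IH h k0 ltac:(lia) ltac:(lia)) as (csl & wl & xl & Wl & Gl & Nl & Cl & L1l & L0l & _ & Vl).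
   destruct (IH (h ++ csl) (k0 + 2 ^ n)%nat ltac:(lia) ltac:(lia)) as (csr & wr & xr & Wr & Gr & Nr & Cr & L1r & L0r & _ & Vr).
   set (h2 := (h ++ csl) ++ csr).
   set (la := (wl * B + n * D)%nat). set (lb := (wr * B + n * D)%nat).
   assert (E1 : (la + D <= lb)%nat).
   { unfold la, lb. pose proof (mul_lt_le wl wr B ltac:(lia)). assert (D <= B)%nat by (subst B; nia). lia. }
   assert (E2 : (lb + D <= m)%nat) by (unfold lb; apply (blk_in q D B M m); auto; lia).
   destruct (job A m r P pv d HA L h2 la lb ltac:(lia) ltac:(lia) ltac:(lia)) as (csj & sa & sb & Sa & Sb & Cj & Vj).
   rewrite <- HD in Sa, Sb, Vj.
   set (F3 := A m r P pv (h2 ++ csj)) in *.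
   assert (Eh : h ++ (csl ++ csr ++ csj) = h2 ++ csj) by (unfold h2; rewrite !app_assoc; auto).
   assert (Gall : forall c, In c (csl ++ csr ++ csj) -> goodc m d c).
   { intros c Hc. apply in_app_or in Hc. destruct Hc as [Hc|Hc]; auto. apply in_app_or in Hc.
     destruct Hc as [Hc|Hc]; auto. apply Cj; auto. }
   assert (Mol : forall i, (i < m)%nat -> A m r P pv (h ++ csl) i <= F3 i).
   { intros i Hi. unfold F3. replace (h2 ++ csj) with ((h ++ csl) ++ (csr ++ csj)) by (unfold h2; rewrite !app_assoc; auto).
     apply (alg_mono' A m r P pv d HA); auto. intros c Hc. apply Gall. apply in_or_app. right; auto. }
   assert (Mor : forall i, (i < m)%nat -> A m r P pv h2 i <= F3 i).
   { intros i Hi. unfold F3. apply (alg_mono' A m r P pv d HA); auto. intros c Hc. apply Cj; auto. }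
   assert (Vl3 := lv_mono q D B M m wl n _ _ HB Hm ltac:(lia) ltac:(lia) Mol).
   assert (Vr3 := lv_mono q D B M m wr n _ _ HB Hm ltac:(lia) ltac:(lia) Mor).
   fold h2 in Vr.
   assert (Wsa : (wl * B <= sa < wl * B + B)%nat).
   { unfold la in Sa. assert (n * D + D <= B)%nat by (subst B; apply mul_lt_le; lia). lia. }
   assert (Wsb : (wr * B <= sb < wr * B + B)%nat).
   { unfold lb in Sb. assert (n * D + D <= B)%nat by (subst B; apply mul_lt_le; lia). lia. }
   assert (Hsa : (sa < m)%nat) by lia. assert (Hsb : (sb < m)%nat) by lia.
   assert (Pnn : forall k i, 0 <= P k i) by (intros; rewrite HP; apply indI_nonneg).
   assert (Lnn : forall x k, (forall i, 0 <= x i) -> 0 <= rsum m (fun i => P k i * x i))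
     by (intros; apply load_nonneg; auto).
   assert (LU : forall s l k, (s < m)%nat -> (l * B <= s < l * B + B)%nat ->
       rsum m (fun i => P k i * unitv s i) = if Nat.eqb k l then 1 else 0).
   { intros. rewrite <- (load_unit B m s l k); auto. apply rsum_ext. intros. rewrite HP. auto. }
   destruct (Rle_dec (rsum (S n) (fun t => rs (wr * B + t * D) D F3)) (rsum (S n) (fun t => rs (wl * B + t * D) D F3))) as [Cw | Cw].
   + exists (csl ++ csr ++ csj), wl, (fun i => xl i + xr i + unitv sb i).
     rewrite Eh. fold F3.
     split. lia. split. auto. split. intros i. pose proof (Nl i); pose proof (Nr i); pose proof (unitv_nonneg sb i); lra.
     split.
     { intros c Hc. assert (Gc := Gall c Hc). destruct Gc as [[Ga _] [_ [Gs _]]].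
       apply in_app_or in Hc. destruct Hc as [Hc|Hc].
       apply covers_mono with xl; auto. intros i _. pose proof (Nr i); pose proof (unitv_nonneg sb i); lra.
       apply in_app_or in Hc. destruct Hc as [Hc|Hc].
       apply covers_mono with xr; auto. intros i _. pose proof (Nl i); pose proof (unitv_nonneg sb i); lra.
       apply covers_mono with (unitv sb); auto. intros i _. pose proof (Nl i); pose proof (Nr i); lra.
       apply covers_unit; auto. apply Cj; auto. }
     assert (LD : forall k, rsum m (fun i => P k i * (xl i + xr i + unitv sb i)) =
        rsum m (fun i => P k i * xl i) + rsum m (fun i => P k i * xr i) + (if Nat.eqb k wr then 1 else 0)).
     { intros k. rewrite load_plus3. rewrite LU with (l := wr); auto. }
     split.
     { intros k. rewrite LD. pose proof (L1l k); pose proof (L1r k).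
       destruct (Nat.eqb_spec k wr).
       - subst k. pose proof (L0l wr ltac:(lia)). pose proof (L0r wr ltac:(lia)). lra.
       - destruct (Compare_dec.lt_dec k (k0 + 2 ^ n)).
         + pose proof (L0r k ltac:(lia)). lra.
         + pose proof (L0l k ltac:(lia)). lra. }
     split.
     { intros k Hk'. rewrite LD. destruct (Nat.eqb_spec k wr). subst k. lia.
       assert (rsum m (fun i => P k i * xl i) <= 0) by (apply L0l; lia).
       assert (rsum m (fun i => P k i * xr i) <= 0) by (apply L0r; lia). lra. }
     split.
     { intros _. exists wr. split. lia. rewrite LD. rewrite Nat.eqb_refl.
       pose proof (Lnn xl wr Nl). pose proof (Lnn xr wr Nr). lra. }
     rewrite S_INR. simpl rsum in Cw |- *. unfold la, lb in Vj.
     assert (0 <= INR L) by apply pos_INR. lra.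
   + exists (csl ++ csr ++ csj), wr, (fun i => xl i + xr i + unitv sa i).
     rewrite Eh. fold F3.
     split. lia. split. auto. split. intros i. pose proof (Nl i); pose proof (Nr i); pose proof (unitv_nonneg sa i); lra.
     split.
     { intros c Hc. assert (Gc := Gall c Hc). destruct Gc as [[Ga _] [_ [Gs _]]].
       apply in_app_or in Hc. destruct Hc as [Hc|Hc].
       apply covers_mono with xl; auto. intros i _. pose proof (Nr i); pose proof (unitv_nonneg sa i); lra.
       apply in_app_or in Hc. destruct Hc as [Hc|Hc].
       apply covers_mono with xr; auto. intros i _. pose proof (Nl i); pose proof (unitv_nonneg sa i); lra.
       apply covers_mono with (unitv sa); auto. intros i _. pose proof (Nl i); pose proof (Nr i); lra.
       apply covers_unit; auto. apply Cj; auto. }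
     assert (LD : forall k, rsum m (fun i => P k i * (xl i + xr i + unitv sa i)) =
        rsum m (fun i => P k i * xl i) + rsum m (fun i => P k i * xr i) + (if Nat.eqb k wl then 1 else 0)).
     { intros k. rewrite load_plus3. rewrite LU with (l := wl); auto. }
     split.
     { intros k. rewrite LD. pose proof (L1l k); pose proof (L1r k).
       destruct (Nat.eqb_spec k wl).
       - subst k. pose proof (L0l wl ltac:(lia)). pose proof (L0r wl ltac:(lia)). lra.
       - destruct (Compare_dec.lt_dec k (k0 + 2 ^ n)).
         + pose proof (L0r k ltac:(lia)). lra.
         + pose proof (L0l k ltac:(lia)). lra. }
     split.
     { intros k Hk'. rewrite LD. destruct (Nat.eqb_spec k wl). subst k. lia.
       assert (rsum m (fun i => P k i * xl i) <= 0) by (apply L0l; lia).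
       assert (rsum m (fun i => P k i * xr i) <= 0) by (apply L0r; lia). lra. }
     split.
     { intros _. exists wl. split. lia. rewrite LD. rewrite Nat.eqb_refl.
       pose proof (Lnn xl wl Nl). pose proof (Lnn xr wl Nr). lra. }
     rewrite S_INR. simpl rsum in Cw |- *. unfold la, lb in Vj.
     assert (0 <= INR L) by apply pos_INR. lra.
Qed.

Lemma ln_le' x y : 0 < x -> x <= y -> ln x <= ln y.
Proof. intros H1 H2. destruct (Rle_lt_or_eq_dec x y H2). left; apply ln_increasing; auto. subst; lra. Qed.

Lemma rpow_nonneg x y : 0 <= rpow x y.
Proof. unfold rpow. destruct (Rle_dec x 0). lra. unfold Rpower. left; apply exp_pos. Qed.

Lemma rpow_pos x y : 0 < x -> 0 < rpow x y.
Proof. unfold rpow. destruct (Rle_dec x 0). lra. intros; unfold Rpower; apply exp_pos. Qed.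

Lemma rpow_le1 x p : 0 <= p -> x <= 1 -> rpow x p <= 1.
Proof. intros Hp Hx. unfold rpow. destruct (Rle_dec x 0). lra. unfold Rpower.
 rewrite <- exp_0. assert (ln x <= 0) by (rewrite <- ln_1; apply ln_le'; lra).
 destruct (Rle_lt_or_eq_dec _ _ (Rmult_le_compat_l p _ _ Hp H)) as [h|h].
 left. apply exp_increasing. lra. rewrite h. rewrite Rmult_0_r. lra. Qed.

Lemma rpow_mono a b c : 0 <= c -> a <= b -> rpow a c <= rpow b c.
Proof. intros Hc Hab. unfold rpow. destruct (Rle_dec a 0); destruct (Rle_dec b 0).
 lra. left; unfold Rpower; apply exp_pos. lra. apply Rle_Rpower_l; lra. Qed.

Lemma rpow_inv v p : 0 < v -> 1 <= p -> rpow (rpow v p) (/ p) = v.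
Proof. intros Hv Hp. unfold rpow at 2. destruct (Rle_dec v 0). lra.
 unfold rpow. destruct (Rle_dec (Rpower v p) 0) as [h|h].
 unfold Rpower in h. pose proof (exp_pos (p * ln v)). lra.
 rewrite Rpower_mult. rewrite Rinv_r by lra. apply Rpower_1. lra. Qed.

Lemma lp_ge r v p l : 1 <= p -> (forall k, 0 <= v k) -> (l < r)%nat -> 0 < v l ->
  v l <= rpow (rsum r (fun k => rpow (v k) p)) (/ p).
Proof. intros Hp Hv Hl Hvl. rewrite <- (rpow_inv (v l) p) at 1 by auto.
 apply rpow_mono. left; apply Rinv_0_lt_compat; lra.
 apply (rsum_ge_term r (fun k => rpow (v k) p) l); auto. intros; apply rpow_nonneg. Qed.

Lemma lp_pos r v p l : 1 <= p -> (forall k, 0 <= v k) -> (l < r)%nat -> 0 < v l ->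
  0 < rpow (rsum r (fun k => rpow (v k) p)) (/ p).
Proof. intros. pose proof (lp_ge r v p l H H0 H1 H2). lra. Qed.

Lemma lp_le2 r v p (M q : nat) : 1 <= p -> INR q <= p -> INR M = 2 ^ q -> (M <= r)%nat ->
  (forall k, 0 <= v k <= 1) -> (forall k, (M <= k)%nat -> v k <= 0) ->
  rpow (rsum r (fun k => rpow (v k) p)) (/ p) <= 2.
Proof. intros Hp Hq HM HMr Hv H0.
 assert (S1 : rsum r (fun k => rpow (v k) p) <= rsum r (fun k => if Nat.ltb k M then 1 else 0)).
 { apply rsum_le. intros k Hk. destruct (Nat.ltb_spec k M).
   apply rpow_le1; [lra | apply Hv]. unfold rpow. destruct (Rle_dec (v k) 0). lra.
   pose proof (H0 k H). lra. }
 assert (S2 : rsum r (fun k => if Nat.ltb k M then 1 else 0) = INR M).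
 { replace r with (M + (r - M))%nat by lia. rewrite rsum_split. rewrite (rsum_zero (r - M)).
   rewrite (rsum_ext M _ (fun _ => 1)). clear. induction M. simpl; lra. rewrite S_INR. simpl. lra.
   intros. destruct (Nat.ltb_spec i M); auto; lia.
   intros. destruct (Nat.ltb_spec (M + i) M); auto; lia. }
 assert (S3 : INR M <= Rpower 2 p).
 { rewrite HM, <- Rpower_pow by lra. apply Rle_Rpower; lra. }
 eapply Rle_trans. apply rpow_mono. left; apply Rinv_0_lt_compat; lra. eapply Rle_trans. apply S1. rewrite S2. apply S3.
 unfold rpow. destruct (Rle_dec (Rpower 2 p) 0). lra. rewrite Rpower_mult, Rinv_r by lra. rewrite Rpower_1; lra. Qed.

Lemma floor_ex x : 0 <= x -> exists n : nat, INR n <= x < INR n + 1.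
Proof. intros Hx.
 assert (HN : exists N : nat, x < INR N).
 { destruct (archimed x) as [H1 _]. exists (Z.to_nat (up x)).
   rewrite INR_IZR_INZ, Z2Nat.id. lra. apply le_IZR. lra. }
 destruct HN as [N HN]. induction N as [|N IH].
 simpl in HN. lra. destruct (Rlt_dec x (INR N)). auto.
 exists N. rewrite S_INR in HN. lra. Qed.

Lemma viol1 m (P : nat -> nat -> R) x k : viol m P (fun _ => 1) x k = rsum m (fun i => P k i * x i).
Proof. unfold viol, Rdiv. rewrite Rinv_1, Rmult_1_r. auto. Qed.

Theorem theorem3 :
  exists c : R, 0 < c /\ exists K : R,
  forall (r d : nat) (p : R),
    1 <= p -> p <= ln (INR r) ->
    K * ln (INR r) <= INR d ->
    forall A : online_alg, valid_alg A ->
    exists (m : nat) (P : nat -> nat -> R) (pv : nat -> R) (cs : list cover),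
      (forall k i, (k < r)%nat -> (i < m)%nat -> is01 (P k i)) /\
      (forall k, (k < r)%nat -> 0 < pv k) /\
      (forall k, (k < r)%nat -> (supp_size m (P k) <= d)%nat) /\
      (forall cv, In cv cs ->
         (forall i, (i < m)%nat -> is01 (fst cv i)) /\ 0 < snd cv /\
         (1 <= supp_size m (fst cv) <= d)%nat) /\
      exists xstar : nat -> R,
        (forall i, (i < m)%nat -> 0 <= xstar i) /\
        (forall cv, In cv cs -> covers m cv xstar) /\
        0 < lp_obj p m r P pv xstar /\
        lp_obj p m r P pv (A m r P pv cs)
          >= c * p * ln (INR d / ln (INR r)) * lp_obj p m r P pv xstar.
Proof.
 exists (1/32). split. lra. exists 729. intros r d p Hp1 Hp2 Hd A HA.
 set (lr := ln (INR r)) in *.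
 assert (Hr : 0 < INR r).
 { destruct (Rlt_dec 0 (INR r)); auto. unfold lr, ln in Hp2. destruct (Rlt_dec 0 (INR r)). contradiction. lra. }
 destruct (floor_ex p ltac:(lra)) as [q [Hq1 Hq2]].
 assert (Hq : (1 <= q)%nat). { destruct q. simpl in Hq2. lra. lia. }
 assert (Hq0 : 1 <= INR q) by (apply (le_INR 1); auto).
 set (X := INR d / lr).
 assert (HX : 729 <= X). { unfold X. apply Rmult_le_reg_r with lr. lra. unfold Rdiv. rewrite Rmult_assoc, Rinv_l by lra. lra. }
 assert (Hln3 : 1 <= ln 3).
 { rewrite <- (ln_exp 1). apply ln_le'. apply exp_pos. apply exp_le_3. }
 assert (Hln3' : ln 3 <= 2).
 { rewrite <- (ln_exp 2). apply ln_le'. lra. pose proof (exp_ineq1_le 2). lra. }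
 assert (HlnX : 6 <= ln X).
 { assert (ln 729 = 6 * ln 3). { replace 729 with (3 ^ 6) by (simpl; lra). rewrite ln_pow by lra. simpl; lra. }
   assert (ln 729 <= ln X) by (apply ln_le'; lra). lra. }
 set (Y := INR d / INR (q + 2)).
 assert (Hq2' : 0 < INR (q + 2)) by (rewrite plus_INR; simpl; lra).
 assert (Hq3 : INR (q + 2) <= 3 * lr) by (rewrite plus_INR; simpl; lra).
 assert (HY3 : X / 3 <= Y).
 { unfold X, Y. unfold Rdiv. apply Rmult_le_reg_r with (3 * lr * INR (q + 2)). nra.
   assert (0 <= INR d) by apply pos_INR.
   replace (INR d * / lr * / 3 * (3 * lr * INR (q + 2))) with (INR d * INR (q + 2)) by (field; lra).
   replace (INR d * / INR (q + 2) * (3 * lr * INR (q + 2))) with (INR d * (3 * lr)) by (field; lra).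
   nra. }
 assert (HlnY : ln X - ln 3 <= ln Y).
 { assert (ln (X / 3) = ln X - ln 3). { unfold Rdiv. rewrite ln_mult, ln_Rinv by lra. lra. }
   rewrite <- H. apply ln_le'; lra. }
 assert (Hl2 : 0 < ln 2 < 1).
 { split. rewrite <- ln_1. apply ln_increasing; lra. rewrite <- (ln_exp 1). apply ln_increasing. lra.
   pose proof (exp_ineq1 1 ltac:(lra)). lra. }
 destruct (floor_ex (ln Y / ln 2)) as [L [HL1 HL2]].
 { apply Rmult_le_pos. lra. left; apply Rinv_0_lt_compat; lra. }
 assert (HLY : ln Y <= ln Y / ln 2).
 { unfold Rdiv. rewrite <- (Rmult_1_r (ln Y)) at 1. apply Rmult_le_compat_l. lra.
   rewrite <- Rinv_1. apply Rinv_le_contravar; lra. }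
 assert (HLX : ln X / 2 <= INR L) by lra.
 set (D := (2 ^ L)%nat).
 assert (HD : INR D <= Y).
 { unfold D. rewrite pow_INR. simpl INR. rewrite <- Rpower_pow by lra.
   replace Y with (Rpower 2 (ln Y / ln 2)). apply Rle_Rpower; lra.
   unfold Rpower. replace (ln Y / ln 2 * ln 2) with (ln Y) by (field; lra). apply exp_ln. lra. }
 assert (HDd : (D * (q + 2) <= d)%nat).
 { apply INR_le. rewrite mult_INR. unfold Y in HD.
   apply Rmult_le_reg_r with (/ INR (q + 2)). apply Rinv_0_lt_compat; lra.
   rewrite Rmult_assoc, Rinv_r, Rmult_1_r by lra. exact HD. }
 set (M := (2 ^ q)%nat).
 assert (HM : INR M = 2 ^ q) by (unfold M; rewrite pow_INR; auto).
 assert (HMr : (M <= r)%nat).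
 { apply INR_le. rewrite HM. rewrite <- Rpower_pow by lra.
   apply Rle_trans with (Rpower 2 p). apply Rle_Rpower; lra.
   apply Rle_trans with (Rpower (exp 1) p). apply Rle_Rpower_l. lra. split. lra. pose proof (exp_ineq1_le 1); lra.
   unfold Rpower. rewrite ln_exp, Rmult_1_r. rewrite <- (exp_ln (INR r)) by lra.
   destruct (Rle_lt_or_eq_dec _ _ Hp2). left; apply exp_increasing; auto. fold lr. rewrite e. lra. }
 set (B := (q * D)%nat). set (m := (M * B)%nat).
 set (P := fun k i => indI (k * B) B i). set (pv := fun _ : nat => 1).
 assert (HD2 : (2 * D <= d)%nat) by nia.
 assert (HBd : (B <= d)%nat) by (unfold B; nia).
 destruct (tree A q L D B M m d r P pv HA Hq eq_refl eq_refl eq_refl HD2 (fun k i => eq_refl) q [] 0%nat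
   ltac:(unfold M; lia) ltac:(lia)) as (cs & w & xs & Hw & Gc & Nx & Cx & L1 & L0 & Lpos & Vw).
 simpl app in Vw.
 exists m, P, pv, cs.
 split. { intros k i _ _. unfold P, is01. apply ind_01. }
 split. { intros; unfold pv; lra. }
 split. { intros k _. pose proof (supp_ind m (k * B) B). change (supp_size m (indI (k * B) B) <= d)%nat. lia. }
 split. { intros cv Hc. destruct (Gc cv Hc) as [_ [H1 [H2 H3]]]. split; auto. split; auto. lra. }
 exists xs. split. auto. split. auto.
 unfold lp_obj.
 assert (Voff : forall k, viol m P pv xs k = rsum m (fun i => P k i * xs i)) by (intros; apply viol1).
 assert (Vnn : forall k, 0 <= viol m P pv xs k).
 { intros. rewrite Voff. apply rsum_nonneg. intros. apply Rmult_le_pos. unfold P; apply indI_nonneg. auto. }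
 destruct (Lpos Hq) as [l [Hla Hlb]].
 split. { apply lp_pos with l; auto. lia. rewrite Voff. lra. }
 assert (Off : rpow (rsum r (fun k => rpow (viol m P pv xs k) p)) (/ p) <= 2).
 { apply (lp_le2 r _ p M q); auto. intros k. split; auto. rewrite Voff; auto.
   intros k Hk. rewrite Voff. apply L0. lia. }
 assert (Offp : 0 < rpow (rsum r (fun k => rpow (viol m P pv xs k) p)) (/ p)).
 { apply lp_pos with l; auto. lia. rewrite Voff. lra. }
 set (F := A m r P pv cs).
 assert (Von : forall k, viol m P pv F k = rsum m (fun i => P k i * F i)) by (intros; apply viol1).
 assert (Vonn : forall k, 0 <= viol m P pv F k).
 { intros. rewrite Von. apply rsum_nonneg. intros. apply Rmult_le_pos. unfold P; apply indI_nonneg.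
   apply alg_nonneg; auto. }
 assert (Vw' : viol m P pv F w >= INR q * INR L / 4).
 { rewrite Von. unfold P. rewrite rsum_ind. unfold B at 2. rewrite rs_blocks. exact Vw.
   unfold m. pose proof (mul_lt_le w M B ltac:(lia)). lia. }
 assert (Hpos : 0 < INR q * INR L / 4).
 { assert (1 <= INR L) by lra. nra. }
 assert (On : INR q * INR L / 4 <= rpow (rsum r (fun k => rpow (viol m P pv F k) p)) (/ p)).
 { eapply Rle_trans. 2: apply lp_ge with (l := w); auto. lra. lia. lra. }
 fold X.
 assert (Hfin : 1 / 32 * p * ln X * 2 <= INR q * INR L / 4).
 { assert (p / 2 <= INR q) by lra. nra. }
 assert (0 <= 1 / 32 * p * ln X) by nra.
 apply Rle_ge. eapply Rle_trans. apply Rmult_le_compat_l. auto. apply Off. lra.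
Qed.
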